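(* The category of finite dimensional rational $\mathbb G_a$-modules over $k$ is wild.
   Context: $k$ is an algebraically closed field of characteristic $p>0$, $\mathbb G_a$ is the additive group over $k$, and a rational $\mathbb G_a$-module is a comodule for $k[\mathbb G_a]=k[T]$. *)

(* Defs.v *)
From HB Require Import structures.
From mathcomp Require Import all_boot all_order all_algebra.
Unset Printing Implicit Defensive.
Import GRing.Theory.
Local Open Scope ring_scope.

Section GaWild.
Variable k : closedFieldType.

(* ---------- finite dimensional rational G_a-modules ----------
   A finite dimensional comodule for k[G_a] = k[T] (Delta T = T(x)1 + 1(x)T,
   counit T |-> 0) on k^n, written in a basis, is a matrix
   rho(T) in M_n(k[T]) (row-vector convention v |-> v *m rho(T)) with
     counit axiom:  rho(0) = 1
     coassociativity:  rho(s + t) = rho(s) * rho(t)  in M_n(k[s,t]).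
   In {poly {poly k}} the outer variable 'X is t and ('X)%:P is s. *)
Record gaMod := GaMod { gdim : nat; grho : 'M[{poly k}]_gdim }.

Definition is_comodule (V : gaMod) : Prop :=
  map_mx (fun q : {poly k} => q.[0]) (grho V) = 1%:M /\
  map_mx (fun q : {poly k} => (q ^:P) \Po ('X + ('X)%:P)) (grho V)
    = map_mx polyC (grho V) *m map_mx (map_poly polyC) (grho V).

Definition ga_hom (V W : gaMod) (f : 'M[k]_(gdim V, gdim W)) : bool :=
  grho V *m map_mx polyC f == map_mx polyC f *m grho W.

Definition ga_indec (V : gaMod) : Prop :=
  (0 < gdim V)%N /\
  forall e : 'M[k]_(gdim V), ga_hom V V e -> e *m e = e -> e = 0 \/ e = 1%:M.

Definition ga_iso (V W : gaMod) : Prop :=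
  exists (f : 'M[k]_(gdim V, gdim W)) (g : 'M[k]_(gdim W, gdim V)),
    [/\ ga_hom V W f, ga_hom W V g, f *m g = 1%:M & g *m f = 1%:M].

Record kxyMod := KxyMod { kdim : nat; kx : 'M[k]_kdim; ky : 'M[k]_kdim }.

Definition kxy_hom (M N : kxyMod) (f : 'M[k]_(kdim M, kdim N)) : bool :=
  (kx M *m f == f *m kx N) && (ky M *m f == f *m ky N).

Definition kxy_indec (M : kxyMod) : Prop :=
  (0 < kdim M)%N /\
  forall e : 'M[k]_(kdim M), kxy_hom M M e -> e *m e = e -> e = 0 \/ e = 1%:M.

Definition kxy_iso (M N : kxyMod) : Prop :=
  exists (f : 'M[k]_(kdim M, kdim N)) (g : 'M[k]_(kdim N, kdim M)),
    [/\ kxy_hom M N f, kxy_hom N M g, f *m g = 1%:M & g *m f = 1%:M].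

Definition short_exact l m n (f : 'M[k]_(l, m)) (g : 'M[k]_(m, n)) : bool :=
  [&& row_free f, row_full g, f *m g == 0 & (\rank f + \rank g == m)%N].

Record rep_embedding := RepEmbedding {
  Fobj : kxyMod -> gaMod;
  Fmor : forall M N : kxyMod,
           'M[k]_(kdim M, kdim N) -> 'M[k]_(gdim (Fobj M), gdim (Fobj N));
  Fobj_comod : forall M, is_comodule (Fobj M);
  Fmor_hom : forall M N f, kxy_hom M N f -> ga_hom (Fobj M) (Fobj N) (Fmor M N f);
  Fmor_id : forall M, Fmor M M 1%:M = 1%:M;
  Fmor_comp : forall L M N (f : 'M[k]_(kdim L, kdim M)) (g : 'M[k]_(kdim M, kdim N)),
      kxy_hom L M f -> kxy_hom M N g -> Fmor L N (f *m g) = Fmor L M f *m Fmor M N g;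
  Fmor_linear : forall M N (a : k) (f g : 'M[k]_(kdim M, kdim N)),
      kxy_hom M N f -> kxy_hom M N g -> Fmor M N (a *: f + g) = a *: Fmor M N f + Fmor M N g;
  Fmor_exact : forall L M N (f : 'M[k]_(kdim L, kdim M)) (g : 'M[k]_(kdim M, kdim N)),
      kxy_hom L M f -> kxy_hom M N g -> short_exact _ _ _ f g -> short_exact _ _ _ (Fmor L M f) (Fmor M N g);
  Fobj_indec : forall M, kxy_indec M -> ga_indec (Fobj M);
  Fobj_iso_refl : forall M N, ga_iso (Fobj M) (Fobj N) -> kxy_iso M N
}.

Definition Ga_modules_wild : Prop := inhabited rep_embedding.

End GaWild.

(* Main.v *)
From HB Require Import structures.
From mathcomp Require Import all_boot all_order all_algebra.
Require Import Defs.
Import GRing.Theory.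
Local Open Scope ring_scope.

Section Ga.
Variable k : closedFieldType.
Variable p : nat.
Hypothesis hp : p \in [pchar k].

Definition rhoM {n} (A B D : 'M[k]_n) : 'M[{poly k}]_n :=
  1%:M + 'X *: map_mx polyC A + 'X^p *: map_mx polyC B + 'X^(p * p) *: map_mx polyC D.

Lemma coef_rho n (A B D : 'M[k]_n) (c : nat) (i j : 'I_n) :
  (rhoM A B D i j)`_c = ((i == j)%:R * (c == 0%N)%:R + A i j * (c == 1%N)%:R
     + B i j * (c == p)%:R + D i j * (c == (p * p)%N)%:R :> k).
Proof.
rewrite /rhoM !mxE !coefD !coefMC coefX !coefXn.
rewrite coefMn coef1; congr (_ + _ + _ + _); try apply: mulrC.
by rewrite mulr_natl.
Qed.


Definition L2 {n} (M : 'M[k]_n) : 'M[{poly {poly k}}]_n := map_mx polyC (map_mx polyC M).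

Lemma L2M n (U V : 'M[k]_n) : L2 U *m L2 V = L2 (U *m V).
Proof. by rewrite /L2 -!map_mxM. Qed.

Lemma rho_sT n (A B D : 'M[k]_n) :
  map_mx polyC (rhoM A B D) =
  1%:M + ('X%:P) *: L2 A + ('X%:P)^+p *: L2 B + ('X%:P)^+(p * p) *: L2 D.
Proof.
rewrite /rhoM !map_mxD !map_mxZ map_mx1 /L2 rmorphXn /=.
by rewrite !rmorphXn.
Qed.

Lemma rho_tT n (A B D : 'M[k]_n) :
  map_mx (map_poly polyC) (rhoM A B D) =
  1%:M + 'X *: L2 A + 'X^p *: L2 B + 'X^(p * p) *: L2 D.
Proof.
apply/matrixP=> i j; rewrite /rhoM /L2 !mxE.
by rewrite !rmorphD !rmorphM /= rmorph_nat map_polyX !map_polyXn !map_polyC.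
Qed.

Lemma rho_F n (A B D : 'M[k]_n) :
  map_mx (fun q : {poly k} => (q ^:P) \Po ('X + ('X)%:P)) (rhoM A B D) =
  1%:M + ('X + 'X%:P) *: L2 A + ('X + 'X%:P)^+p *: L2 B + ('X + 'X%:P)^+(p * p) *: L2 D.
Proof.
apply/matrixP=> i j; rewrite /rhoM /L2 !mxE.
rewrite !rmorphD !rmorphM /= rmorph_nat map_polyX !map_polyXn !map_polyC.
rewrite comp_polyX !comp_Xn_poly !comp_polyC -polyC_natr comp_polyC.
by rewrite !polyC_natr.
Qed.

Lemma frob2 (x y : {poly {poly k}}) : (x + y) ^+ p = x ^+ p + y ^+ p.
Proof.
have hp2 : p \in [pchar {poly {poly k}}] by rewrite !(pchar_poly _ p).
by rewrite -!(pFrobenius_autE hp2) pFrobenius_autD_comm //; apply: mulrC.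
Qed.

Lemma frob3 (x y : {poly {poly k}}) : (x + y) ^+ (p * p) = x ^+ (p * p) + y ^+ (p * p).
Proof. by rewrite !exprM !frob2. Qed.

Lemma rho_comod n (A B D : 'M[k]_n)
  (H : forall U V, U \in [:: A; B; D] -> V \in [:: A; B; D] -> U *m V = 0) :
  @is_comodule k (@GaMod k n (rhoM A B D)).
Proof.
have pp : (0 < p)%N by rewrite prime_gt0 // (pcharf_prime hp).
split.
  apply/matrixP=> i j; rewrite /rhoM !mxE !hornerE.
  rewrite !expr0n !eqn0Ngt pp muln_gt0 pp /= !mul0r !addr0.
  by rewrite -polyC_natr hornerC.
rewrite /= rho_F rho_sT rho_tT.
have zAA : L2 A *m L2 A = 0 by rewrite L2M H ?inE ?eqxx ?orbT // /L2 !map_mx0.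
have zAB : L2 A *m L2 B = 0 by rewrite L2M H ?inE ?eqxx ?orbT // /L2 !map_mx0.
have zAD : L2 A *m L2 D = 0 by rewrite L2M H ?inE ?eqxx ?orbT // /L2 !map_mx0.
have zBA : L2 B *m L2 A = 0 by rewrite L2M H ?inE ?eqxx ?orbT // /L2 !map_mx0.
have zBB : L2 B *m L2 B = 0 by rewrite L2M H ?inE ?eqxx ?orbT // /L2 !map_mx0.
have zBD : L2 B *m L2 D = 0 by rewrite L2M H ?inE ?eqxx ?orbT // /L2 !map_mx0.
have zDA : L2 D *m L2 A = 0 by rewrite L2M H ?inE ?eqxx ?orbT // /L2 !map_mx0.
have zDB : L2 D *m L2 B = 0 by rewrite L2M H ?inE ?eqxx ?orbT // /L2 !map_mx0.
have zDD : L2 D *m L2 D = 0 by rewrite L2M H ?inE ?eqxx ?orbT // /L2 !map_mx0.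
move: (L2 A) (L2 B) (L2 D) zAA zAB zAD zBA zBB zBD zDA zDB zDD => a b d zAA zAB zAD zBA zBB zBD zDA zDB zDD.
rewrite !mulmxDl !mulmxDr !mul1mx !mulmx1 -!scalemxAl -!scalemxAr.
rewrite zAA zAB zAD zBA zBB zBD zDA zDB zDD !scaler0 !addr0.
rewrite frob2 frob3 !scalerDl !addrA.
by rewrite [in RHS](ACl (1*2*5*3*6*4*7)%AC).
Qed.

Definition cmx (c : nat) {m n} (M : 'M[{poly k}]_(m, n)) : 'M[k]_(m, n) :=
  map_mx (fun q : {poly k} => q`_c) M.

Lemma cmx_mulC c m n l (R : 'M[{poly k}]_(m, n)) (f : 'M[k]_(n, l)) :
  cmx c (R *m map_mx polyC f) = cmx c R *m f.
Proof.
apply/matrixP=> i j; rewrite /cmx !mxE coef_sum; apply: eq_bigr => r _.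
by rewrite !mxE coefMC.
Qed.

Lemma cmx_Cmul c m n l (R : 'M[{poly k}]_(n, l)) (f : 'M[k]_(m, n)) :
  cmx c (map_mx polyC f *m R) = f *m cmx c R.
Proof.
apply/matrixP=> i j; rewrite /cmx !mxE coef_sum; apply: eq_bigr => r _.
by rewrite !mxE coefCM.
Qed.

Lemma p_gt1 : (1 < p)%N.
Proof. exact: prime_gt1 (pcharf_prime hp). Qed.

Lemma cmx_rho n (A B D : 'M[k]_n) :
  [/\ cmx 1%N (rhoM A B D) = A, cmx p%N (rhoM A B D) = B & cmx (p * p)%N (rhoM A B D) = D].
Proof.
have h1 := p_gt1.
have e1 : (1 == p)%N = false by rewrite ltn_eqF.
have e2 : (1 == p * p)%N = false.
  by rewrite ltn_eqF // (leq_trans h1) // leq_pmull // ltnW.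
have e3 : (p == p * p)%N = false.
  by rewrite ltn_eqF // ltn_Pmull // ltnW.
have e4 : (p == 0)%N = false by rewrite eqn0Ngt ltnW.
have e5 : (p * p == 0)%N = false by rewrite eqn0Ngt muln_gt0 ltnW.
have e1' : (p == 1%N) = false by rewrite eq_sym.
have e2' : (p * p == 1%N)%N = false by rewrite eq_sym.
have e3' : (p * p == p)%N = false by rewrite eq_sym.
split; apply/matrixP=> i j; rewrite /cmx mxE coef_rho.
- by rewrite e1 e2 /= !mulr0 !addr0 add0r mulr1.
- by rewrite e1' e3 e4 eqxx /= !mulr0 !addr0 !add0r mulr1.
- by rewrite e2' e3' e5 eqxx /= !mulr0 !addr0 !add0r mulr1.
Qed.

Definition nilb {m} (U : 'M[k]_m) : 'M[k]_(m + m) := block_mx 0 U 0 0.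

Lemma nilbM m (U V : 'M[k]_m) : nilb U *m nilb V = 0.
Proof. by rewrite /nilb mulmx_block !mulmx0 !mul0mx !addr0 block_mx0. Qed.

Definition FobjM (M : kxyMod k) : gaMod k :=
  @GaMod k (kdim k M + kdim k M) (rhoM (nilb 1%:M) (nilb (kx k M)) (nilb (ky k M))).

Lemma FobjM_comod M : is_comodule k (FobjM M).
Proof.
apply: rho_comod => U V; rewrite !inE.
by do 2! (case/or3P=> /eqP->); rewrite nilbM.
Qed.

Definition dg {m n} (f : 'M[k]_(m, n)) : 'M[k]_(m + m, n + n) := block_mx f 0 0 f.

Lemma hom_form M N (f : 'M[k]_(gdim k (FobjM M), gdim k (FobjM N))) :
  ga_hom k (FobjM M) (FobjM N) f ->
  exists P Q, f = block_mx P Q 0 P /\ kxy_hom k M N P.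
Proof.
move/eqP=> E.
have [a1 a2 a3] := cmx_rho _ (nilb 1%:M) (nilb (kx k M)) (nilb (ky k M)).
have [b1 b2 b3] := cmx_rho _ (nilb 1%:M) (nilb (kx k N)) (nilb (ky k N)).
have E1 := congr1 (cmx 1%N) E; have E2 := congr1 (cmx p) E; have E3 := congr1 (cmx (p * p)%N) E.
rewrite /= cmx_mulC cmx_Cmul in E1.
rewrite /= cmx_mulC cmx_Cmul in E2.
rewrite /= cmx_mulC cmx_Cmul in E3.
rewrite a1 b1 in E1; rewrite a2 b2 in E2; rewrite a3 b3 in E3.
rewrite -[f]submxK in E1 E2 E3 *.
move: (ulsubmx f) (ursubmx f) (dlsubmx f) (drsubmx f) E1 E2 E3 => P Q R S.
rewrite /nilb !mulmx_block.
rewrite !mulmx0 !mul0mx !mul1mx !mulmx1 !addr0 !add0r.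
case/eq_block_mx=> h1 h2 h3 h4.
case/eq_block_mx=> _ g2 _ _.
case/eq_block_mx=> _ g3 _ _.
exists P, Q; split.
  by rewrite h1 h2.
by rewrite h2 in g2 g3; rewrite /kxy_hom g2 g3 !eqxx.
Qed.

Lemma rho_comm n m (A B D : 'M[k]_n) (A' B' D' : 'M[k]_m) (f : 'M[k]_(n, m)) :
  A *m f = f *m A' -> B *m f = f *m B' -> D *m f = f *m D' ->
  rhoM A B D *m map_mx polyC f = map_mx polyC f *m rhoM A' B' D'.
Proof.
move=> hA hB hD.
rewrite /rhoM !mulmxDl !mulmxDr -!scalemxAl -!scalemxAr -!map_mxM hA hB hD.
by rewrite mul1mx mulmx1.
Qed.

Lemma nil_dg m n (U : 'M[k]_m) (U' : 'M[k]_n) (f : 'M[k]_(m, n)) :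
  U *m f = f *m U' -> nilb U *m dg f = dg f *m nilb U'.
Proof.
by move=> h; rewrite /nilb /dg !mulmx_block !mulmx0 !mul0mx !addr0 !add0r h.
Qed.

Lemma Fhom M N (f : 'M[k]_(kdim k M, kdim k N)) :
  kxy_hom k M N f -> ga_hom k (FobjM M) (FobjM N) (dg f).
Proof.
case/andP=> /eqP h1 /eqP h2; apply/eqP; apply: rho_comm; apply: nil_dg => //.
by rewrite mul1mx mulmx1.
Qed.

Lemma dg1 m : dg (1%:M : 'M[k]_m) = 1%:M.
Proof. by rewrite /dg -scalar_mx_block. Qed.

Lemma dgM l m n (f : 'M[k]_(l, m)) (g : 'M[k]_(m, n)) : dg (f *m g) = dg f *m dg g.
Proof. by rewrite /dg mulmx_block !mulmx0 !mul0mx !addr0 !add0r. Qed.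

Lemma dgL m n (a : k) (f g : 'M[k]_(m, n)) : dg (a *: f + g) = a *: dg f + dg g.
Proof. by rewrite /dg scale_block_mx add_block_mx !scaler0 !add0r. Qed.

Lemma dg_exact l m n (f : 'M[k]_(l, m)) (g : 'M[k]_(m, n)) :
  short_exact k l m n f g -> short_exact k (l + l) (m + m) (n + n) (dg f) (dg g).
Proof.
case/and4P=> h1 h2 /eqP h3 /eqP h4.
apply/and4P; split.
- by rewrite /row_free /dg rank_diag_block_mx (eqP h1).
- by rewrite /row_full /dg rank_diag_block_mx (eqP h2).
- by rewrite -dgM h3 /dg block_mx0.
- by rewrite /dg !rank_diag_block_mx addnACA h4.
Qed.

Lemma Findec M : kxy_indec k M -> ga_indec k (FobjM M).
Proof.
case=> hpos hid; split; first by rewrite /= addn_gt0 hpos.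
move=> e he hee; have [P [Q [eE hP]]] := @hom_form _ _ _ he.
move: hee; rewrite eE mulmx_block !mulmx0 !mul0mx !addr0 !add0r.
case/eq_block_mx=> hPP hQ _ _.
case: (hid P hP hPP) => hP0.
  left; move: hQ; rewrite hP0 mul0mx mulmx0 addr0 => <-.
  by rewrite block_mx0.
right; move: hQ; rewrite hP0 mul1mx mulmx1 => hQ.
have Q0 : Q = 0 by apply: (@addrI _ Q); rewrite addr0.
by rewrite Q0 -scalar_mx_block.
Qed.

Lemma Fiso M N : ga_iso k (FobjM M) (FobjM N) -> kxy_iso k M N.
Proof.
case=> f [g [hf hg fg gf]].
have [P [Q [fE hP]]] := @hom_form _ _ _ hf.
have [P' [Q' [gE hP']]] := @hom_form _ _ _ hg.
exists P, P'; split => //.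
  move: fg; rewrite fE gE mulmx_block (scalar_mx_block (kdim k M) (kdim k M)).
  by case/eq_block_mx; rewrite mulmx0 addr0.
move: gf; rewrite fE gE mulmx_block (scalar_mx_block (kdim k N) (kdim k N)).
by case/eq_block_mx; rewrite mulmx0 addr0.
Qed.

Lemma wild : Ga_modules_wild k.
Proof.
constructor.
apply: (@RepEmbedding k FobjM (fun M N f => dg f)).
- exact: FobjM_comod.
- exact: Fhom.
- move=> M; exact: dg1.
- move=> L M N f g _ _; exact: dgM.
- move=> M N a f g _ _; exact: dgL.
- move=> L M N f g _ _; exact: dg_exact.
- exact: Findec.
- exact: Fiso.
Qed.

End Ga.

Theorem corollary3p3 (k : closedFieldType) (p : nat) (hp : p \in [pchar k]%R) :
  Ga_modules_wild k.
Proof. exact: wild hp. Qed.
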